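(* Let $\tilde{\mathbb{I}}=\{\langle \mu,\nu\rangle\in[0,1]^2 \mid \mu+\nu\le 1\}$, equipped with the subspace topology inherited from $\mathbb{R}^2$. There is no continuous function $f:\tilde{\mathbb{I}}\to\mathbb{R}$ satisfying both of the following conditions: (1) $f$ is injective, i.e., for all $\alpha,\beta\in\tilde{\mathbb{I}}$ with $\alpha\neq\beta$, $f(\alpha)\neq f(\beta)$; (2) $f$ is increasing with respect to Atanassov's partial order $\subset$, i.e., for all $\alpha,\beta\in\tilde{\mathbb{I}}$ with $\alpha\subset\beta$, $f(\alpha)\le f(\beta)$.
   Context: Elements $\alpha=\langle\mu_\alpha,\nu_\alpha\rangle\in\tilde{\mathbb{I}}$ are called intuitionistic fuzzy values (IFVs). Atanassov's partial order on $\tilde{\mathbb{I}}$ is defined by $\langle\mu_1,\nu_1\rangle\subset\langle\mu_2,\nu_2\rangle$ if and only if $\mu_1\le\mu_2$ and $\nu_1\ge\nu_2$. *)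

(* Defs.v *)
From HB Require Import structures.
From mathcomp Require Import all_boot all_order all_algebra.
From mathcomp Require Import all_classical all_reals all_analysis.
Set Implicit Arguments. Unset Strict Implicit. Unset Printing Implicit Defensive.
Import Order.TTheory GRing.Theory Num.Theory.
Local Open Scope classical_set_scope.
Local Open Scope ring_scope.

Definition IFV (R : realType) : set (R * R) :=
  [set a | 0 <= a.1 <= 1 /\ 0 <= a.2 <= 1 /\ a.1 + a.2 <= 1].

Definition atanassov_le (R : realType) (a b : R * R) : Prop :=
  a.1 <= b.1 /\ b.2 <= a.2.

(* Main.v *)
Require Import Defs.
From HB Require Import structures.
From mathcomp Require Import all_boot all_order all_algebra.
From mathcomp Require Import all_classical all_reals all_analysis.
From mathcomp Require Import lra.
Import Order.TTheory GRing.Theory Num.Theory numFieldNormedType.Exports.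
Local Open Scope classical_set_scope.
Local Open Scope ring_scope.

Theorem theorem3 (R : realType) :
  ~ exists f : R * R -> R,
      {within @IFV R, continuous f} /\
      {in @IFV R &, injective f} /\
      (forall a b, a \in @IFV R -> b \in @IFV R -> atanassov_le a b -> f a <= f b).
Proof.
move=> [f [fc [finj fmon]]].
pose p := fun t : R => (t, 1 - t).
have pin : forall t, t \in `[0, 1] -> IFV (p t).
  move=> t; rewrite in_itv /= => /andP[t0 t1]; rewrite /IFV /p /=.
  split; first by rewrite t0 t1.
  split; last by rewrite addrC subrK.
  by apply/andP; split; rewrite ?subr_ge0 ?lerBlDr ?lerDl.
have pc : forall t, p @ nbhs t --> nbhs (p t).
  move=> t.
  have h := (@cvg_pair R R R (nbhs t) (nbhs t) (nbhs (1 - t)) _ _ _ id (fun x => 1 - x) cvg_id (cvgB (@cvg_cst _ (1:R) _ (nbhs t) _) cvg_id)).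
  exact: h.
pose g := fun t => f (p t).
have gc : {within `[0, 1], continuous g}.
  apply/subspace_continuousP => t t01.
  have hf := (subspace_continuousP (@IFV R) f).1 fc (p t) (pin t t01).
  apply: (cvg_comp _ _ _ hf).
  move=> W /=; rewrite /within /= => hW.
  have h := pc t _ hW.
  rewrite nbhs_simpl /=.
  have h' : nbhs t (fun x => IFV (p x) -> W (p x)) := h.
  apply: (filterS _ h') => x /= hx x01; apply: hx; exact: pin x01.
pose b : R * R := (1/4, 1/4).
have bin : b \in @IFV R.
  by rewrite inE /IFV /b /=; split; [|split]; rewrite ?andbT //; [apply/andP; split|apply/andP; split|]; lra.
have b0 : (0:R) \in `[0, 1] by rewrite in_itv /= ler01 lexx.
have b1 : (1:R) \in `[0, 1] by rewrite in_itv /= ler01 lexx.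
have h0 : g 0 <= f b.
  apply: fmon => //; first exact: mem_set (pin 0 b0).
  by rewrite /atanassov_le /p /b /=; split; lra.
have h1 : f b <= g 1.
  apply: fmon => //; first exact: mem_set (pin 1 b1).
  by rewrite /atanassov_le /p /b /=; split; lra.
have [c c01 gcb] : exists2 c, c \in `[0, 1] & g c = f b.
  apply: IVT; [exact: ler01 | exact: gc | ].
  by rewrite ge_min le_max h0 h1 orbT.
have : p c = b.
  apply: finj => //; exact: mem_set (pin c c01).
rewrite /p /b => -[e1 e2].
lra.
Qed.
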